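(* Let $\mathcal G$ be a core network with input nodes $\iota_1,\dots,\iota_n$ and output node $o$, fix $m$, and let $\mathcal D_m$ be the vestigial subnetwork with respect to $\iota_m$ (assumed nonempty). Let $D_{m,j}$ be one of the diagonal blocks of the Frobenius–König normal form of $J_{\mathcal D_m}$ and let $\mathcal D_{m,j}$ be the subnetwork of $\mathcal D_m$ associated to $D_{m,j}$. Then: (a) nodes in $\mathcal D_{m,j}$ are not $\mathcal D_m$-path equivalent to any node in $\mathcal D_m\setminus\mathcal D_{m,j}$; (b) $\mathcal D_{m,j}$ is a path component of $\mathcal D_m$.
   Context: Setting: $\mathcal G$ is a finite directed graph with input nodes $\iota_1,\dots,\iota_n$ and output node $o$; node $b$ is downstream from $a$ (and $a$ upstream from $b$) if there is a directed path from $a$ to $b$ (every node is up/downstream from itself). $\mathcal G$ is a core network if every node is upstream from $o$ and downstream from at least one input node. $\mathcal G_m$ is the subnetwork of nodes downstream from $\iota_m$ and upstream from $o$; the vestigial subnetwork $\mathcal D_m$ consists of the nodes of $\mathcal G$ not in $\mathcal G_m$ (i.e. not downstream from $\iota_m$) with all arrows of $\mathcal G$ between them. Each node $j$ carries a function $f_j$ and the partial derivatives $f_{j,x_\ell}$, one for each arrow $\ell\to j$ and one self-coupling $f_{j,x_j}$ for every node, are regarded as independent indeterminates; for a set of nodes $\mathcal K$, $J_{\mathcal K}=(f_{j,x_\ell})_{j,\ell\in\mathcal K}$ (entries $0$ where there is no arrow). By Frobenius–König theory there are permutation matrices $P_m,Q_m$ with $P_mJ_{\mathcal D_m}Q_m$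 block upper triangular with square fully indecomposable diagonal blocks $D_{m,1},\dots,D_{m,n_m}$, each with irreducible determinant. Each block $D_{m,j}$ of order $k_j$ contains exactly $k_j$ self-couplings, and after permuting rows and columns it equals $J_{\mathcal D_{m,j}}$ for the set $\mathcal D_{m,j}$ of nodes indexing its rows; $\mathcal D_{m,j}$ (with all arrows between its nodes) is the subnetwork associated to $D_{m,j}$. For a subnetwork $\mathcal K$, nodes $a,b$ are $\mathcal K$-path equivalent if there are directed paths within $\mathcal K$ from $a$ to $b$ and from $b$ to $a$; a $\mathcal K$-path component is an equivalence class. *)

(* Defs.v *)
From mathcomp Require Import all_boot.
Set Implicit Arguments. Unset Strict Implicit. Unset Printing Implicit Defensive.

(* Inputs [iota : 'I_n -> V], output [o : V].
   b is downstream from a iff [connect arrow a b] (reflexive). *)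

Definition core_network (V : finType) (arrow : rel V) (n : nat)
  (iota : 'I_n -> V) (o : V) : Prop :=
  forall v : V, connect arrow v o /\ exists i : 'I_n, connect arrow (iota i) v.

Definition Gsub (V : finType) (arrow : rel V) (n : nat)
  (iota : 'I_n -> V) (o : V) (m : 'I_n) : {set V} :=
  [set v | connect arrow (iota m) v && connect arrow v o].

Definition vestigial (V : finType) (arrow : rel V) (n : nat)
  (iota : 'I_n -> V) (o : V) (m : 'I_n) : {set V} :=
  ~: Gsub arrow iota o m.

(* Zero pattern of the Jacobian: the entry in row j, column l is the
   indeterminate f_{j,x_l}, present iff j = l (self-coupling) or there is
   an arrow l -> j; otherwise it is 0. *)
Definition jac_nz (V : finType) (arrow : rel V) (j l : V) : bool :=
  (j == l) || arrow l j.

(* The square submatrix of J with row set R and column set C (entries are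
   independent indeterminates or 0) is fully indecomposable:
   order k = #|R| = #|C| >= 1; if k = 1 the entry is nonzero; if k >= 2
   there is no s x (k - s) zero submatrix with 1 <= s <= k - 1. *)
Definition fully_indecomposable (V : finType) (arrow : rel V)
  (R C : {set V}) : Prop :=
  #|R| = #|C| /\
  ((#|R| = 1 /\ exists r c, [/\ r \in R, c \in C & jac_nz arrow r c]) \/
   (2 <= #|R| /\
    forall S T : {set V}, S \subset R -> T \subset C ->
      0 < #|S| < #|R| -> #|S| + #|T| = #|R| ->
      exists r c, [/\ r \in S, c \in T & jac_nz arrow r c])).

Definition row_block (V : finType) (D : {set V}) (t : nat)
  (rb : V -> 'I_t) (i : 'I_t) : {set V} := [set x in D | rb x == i].

(* Frobenius-Konig normal form of J_D: P J_D Q is block upper triangular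
   with t square fully indecomposable diagonal blocks D_1, ..., D_t.
   Permutations P, Q are recorded by the block each row (rb) and each
   column (cb) is sent to; the order inside a block is irrelevant.
   Block upper triangular: the entry (r, c) is 0 whenever the row block of
   r comes after the column block of c. *)
Definition FK_normal_form (V : finType) (arrow : rel V) (D : {set V})
  (t : nat) (rb cb : V -> 'I_t) : Prop :=
  (forall i : 'I_t,
     fully_indecomposable arrow (row_block D rb i) (row_block D cb i)) /\
  (forall r c, r \in D -> c \in D -> jac_nz arrow r c -> rb r <= cb c).

Definition path_in (V : finType) (arrow : rel V) (K : {set V}) (a b : V)
  : bool :=
  [&& a \in K, b \in K &
      connect [rel x y | [&& x \in K, y \in K & arrow x y]] a b].

Definition path_equiv (V : finType) (arrow : rel V) (K : {set V}) (a b : V)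
  : bool := path_in arrow K a b && path_in arrow K b a.

Definition path_component (V : finType) (arrow : rel V) (K P : {set V})
  : Prop :=
  exists2 a, a \in K & P = [set b in K | path_equiv arrow K a b].

(* Main.v *)
Require Import Defs.
From mathcomp Require Import all_boot.
Set Implicit Arguments. Unset Strict Implicit. Unset Printing Implicit Defensive.

Lemma sum_blocks (V : finType) (D : {set V}) t (f : V -> 'I_t) :
  \sum_(x in D) (f x : nat) = \sum_(i < t) #|row_block D f i| * i.
Proof.
rewrite (partition_big f xpredT) //=; apply: eq_bigr => i _.
rewrite (eq_bigr (fun _ => val i)); last by move=> x /andP[_ /eqP->].
rewrite sum_nat_const; congr (_ * _); apply: eq_card => x.
by rewrite !inE.
Qed.

Lemma rb_eq_cb (V : finType) (D : {set V}) t (rb cb : V -> 'I_t) :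
  (forall x, x \in D -> rb x <= cb x) ->
  (forall i, #|row_block D rb i| = #|row_block D cb i|) ->
  forall x, x \in D -> rb x = cb x.
Proof.
move=> le E.
have S : \sum_(x in D) (rb x : nat) = \sum_(x in D) (cb x : nat).
  by rewrite !sum_blocks; apply: eq_bigr => i _; rewrite E.
have S2 : \sum_(x in D) (cb x : nat) =
   \sum_(x in D) (rb x : nat) + \sum_(x in D) (cb x - rb x).
  rewrite -big_split /=; apply: eq_bigr => x xD; by rewrite subnKC ?le.
have Z : \sum_(x in D) (cb x - rb x) == 0.
  by apply/eqP; apply/(@addnI (\sum_(x in D) (rb x : nat))); rewrite addn0 -S2 S.
move: Z; rewrite sum_nat_eq0 => /forallP Z x xD.
have := Z x; rewrite xD /= subn_eq0 => H.
by apply/val_inj/eqP; rewrite eqn_leq le.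
Qed.
Definition rrel (V : finType) (arrow : rel V) (K : {set V}) : rel V :=
  [rel x y | [&& x \in K, y \in K & arrow x y]].

Lemma FI_strong (V : finType) (arrow : rel V) (R : {set V}) :
  fully_indecomposable arrow R R ->
  forall a b, a \in R -> b \in R -> connect (rrel arrow R) b a.
Proof.
move=> [_ FI] a b aR bR; apply/negPn/negP => nba.
pose S := [set x in R | connect (rrel arrow R) x a].
have aS : a \in S by rewrite inE aR connect0.
have bS : b \notin S by rewrite inE bR.
have SR : S \subset R by apply/subsetP => x; rewrite inE => /andP[].
have S0 : 0 < #|S| by apply/card_gt0P; exists a.
have SR' : #|S| < #|R|.
  by apply: proper_card; apply/properP; split => //; exists b.
case: FI => [[E1 _]|[_ H]].
  by move: SR'; rewrite E1; case: #|S| S0.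
have C1 : 0 < #|S| < #|R| by rewrite S0 SR'.
have C2 : #|S| + #|R :\: S| = #|R| by rewrite -(cardsID S R) (setIidPr SR).
have [r [c [rS cT]]] := H S (R :\: S) SR (subsetDl _ _) C1 C2.
move: cT; rewrite inE => /andP[cnS cR].
rewrite /jac_nz => /orP[/eqP rc|acr].
  by move: cnS; rewrite -rc rS.
move: rS; rewrite inE => /andP[rR ra].
move: cnS; rewrite !inE => /negP; apply; apply/andP; split=> //.
apply: connect_trans ra; apply: connect1; exact/and3P.
Qed.

Lemma path_down (V : finType) (arrow : rel V) (D : {set V}) t (rb : V -> 'I_t) :
  (forall r c, r \in D -> c \in D -> arrow c r -> rb r <= rb c) ->
  forall a b, connect (rrel arrow D) a b -> rb b <= rb a.
Proof.
move=> H a b /connectP[p pth ->]; elim: p a pth => //= y p IH a /andP[/and3P[aD yD ay] pth].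
exact: leq_trans (IH _ pth) (H _ _ yD aD ay).
Qed.

Theorem theorem3p7 (V : finType) (arrow : rel V) (n : nat)
  (iota : 'I_n -> V) (o : V) (m : 'I_n) :
  core_network arrow iota o ->
  vestigial arrow iota o m != set0 ->
  forall (t : nat) (rb cb : V -> 'I_t),
  FK_normal_form arrow (vestigial arrow iota o m) rb cb ->
  forall j : 'I_t,
  let Dm := vestigial arrow iota o m in
  let Dmj := row_block Dm rb j in
  (forall a b, a \in Dmj -> b \in Dm :\: Dmj -> ~~ path_equiv arrow Dm a b) /\
  path_component arrow Dm Dmj.
Proof.
move=> _ _ t rb cb [FI UT] j Dm Dmj.
have E : forall x, x \in Dm -> rb x = cb x.
  apply: rb_eq_cb.
    by move=> x xD; apply: UT => //; rewrite /jac_nz eqxx.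
  by move=> i; case: (FI i).
have Hd : forall r c, r \in Dm -> c \in Dm -> arrow c r -> rb r <= rb c.
  by move=> r c rD cD acr; rewrite [rb c]E //; apply: UT => //; rewrite /jac_nz acr orbT.
have PE : forall a b, path_equiv arrow Dm a b -> rb a = rb b.
  move=> a b /andP[/and3P[_ _ ab] /and3P[_ _ ba]].
  by apply/val_inj/eqP; rewrite eqn_leq (path_down Hd ab) (path_down Hd ba).
have PA : forall a b, a \in Dmj -> b \in Dm :\: Dmj -> ~~ path_equiv arrow Dm a b.
  move=> a b aj /setDP[bD nb]; apply/negP => /PE rab; apply/negP: nb; rewrite negbK.
  move: aj; rewrite /Dmj /row_block !in_set => /andP[_ ra].
  by rewrite -rab ra andbT; move: bD; rewrite /Dm /vestigial /Gsub !inE.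
split => //.
have Rb : row_block Dm cb j = Dmj.
  apply/setP => x; rewrite /row_block !in_set; apply/andb_id2l => xD; rewrite E //; move: xD; by rewrite /Dm /vestigial /Gsub !inE.
have FIj := FI j; rewrite Rb in FIj.
have [a aj] : exists a, a \in Dmj.
  case: FIj => _ [[E1 _]|[E2 _]]; apply/set0Pn; rewrite -card_gt0 ?E1 //.
  exact: leq_trans E2.
have aD : a \in Dm by move: aj; rewrite inE => /andP[].
have jD : Dmj \subset Dm by apply/subsetP => x; rewrite inE => /andP[].
have sub : forall x y, connect (rrel arrow Dmj) x y -> connect (rrel arrow Dm) x y.
  apply: connect_sub => x y /= /and3P[xj yj xy]; apply: connect1.
  by apply/and3P; split => //; apply: (subsetP jD).
exists a => //; apply/setP => b; rewrite inE.
case bj: (b \in Dmj).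
  have bD := subsetP jD _ bj.
  by rewrite bD /path_equiv /path_in aD bD !sub //; apply: (FI_strong FIj).
case bD: (b \in Dm) => //=; apply/esym/negbTE/PA => //.
by rewrite in_setD bj bD.
Qed.
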